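(* Let $K\subset K'$ be compact and connected subgroups of $U(N)$ and let $A\in\mathbb{C}^{N\times N}$. (a) $W_K(C,A)$ is rotationally symmetric for all $C\in\mathbb{C}^{N\times N}$ if and only if the orbit $\mathcal{O}_K(A)$ is weakly rotationally symmetric. (b) If $W_K(C,A)$ is rotationally symmetric for all $C\in\mathbb{C}^{N\times N}$, then $W_{K'}(C,A)$ is rotationally symmetric for all $C\in\mathbb{C}^{N\times N}$.
   Context: For a compact connected subgroup $K\subset U(N)$ and $C,A\in\mathbb{C}^{N\times N}$: $W_K(C,A)=\{\mathrm{tr}(C^\dagger UAU^\dagger)\mid U\in K\}$ and $\mathcal{O}_K(A)=\{UAU^\dagger\mid U\in K\}$. A subset $W\subset\mathbb{C}$ is rotationally symmetric if $e^{i\varphi}W=W$ for all $\varphi\in\mathbb{R}$; the orbit $\mathcal{O}_K(A)$ is weakly rotationally symmetric if $e^{i\varphi}\mathcal{O}_K(A)=\mathcal{O}_K(A)$ for all $\varphi\in\mathbb{R}$. *)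

(* Defs.v *)
From HB Require Import structures.
From mathcomp Require Import all_boot all_order all_algebra.
From mathcomp Require Import all_classical all_reals all_analysis.
From mathcomp Require Import complex.
Import numFieldNormedType.Exports.

Set Implicit Arguments.
Unset Strict Implicit.
Unset Printing Implicit Defensive.

Local Open Scope ring_scope.
Local Open Scope classical_set_scope.

(* The standard (norm) topology on C = R[i]: |z| = sqrt (Re z ^2 + Im z ^2).
   Matrices 'M[R[i]]_N then carry the product (= Euclidean) topology. *)
#[non_forgetful_inheritance]
HB.instance Definition _ (R : rcfType) :=
  PseudoPointedMetric.copy (complex R) (complex R)^o.

Definition adjmx (R : rcfType) (N : nat) (A : 'M[R[i]]_N) : 'M[R[i]]_N :=
  (map_mx Num.conj A)^T.

Definition unitary_group (R : rcfType) (N : nat) : set 'M[R[i]]_N :=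
  [set U | U *m adjmx U = 1%:M].

Definition compact_connected_subgroup_U (R : rcfType) (N : nat)
    (K : set 'M[R[i]]_N) : Prop :=
  [/\ K `<=` @unitary_group R N,
      K 1%:M,
      (forall U V, K U -> K V -> K (U *m V)),
      (forall U, K U -> K (adjmx U))   (* inverse of a unitary is its adjoint *)
    & compact K /\ connected K].

Definition expi (R : realType) (phi : R) : R[i] := (cos phi +i* sin phi)%C.

Definition W_K (R : rcfType) (N : nat) (K : set 'M[R[i]]_N)
    (C A : 'M[R[i]]_N) : set R[i] :=
  [set \tr (adjmx C *m (U *m A *m adjmx U)) | U in K].

Definition orbit_K (R : rcfType) (N : nat) (K : set 'M[R[i]]_N)
    (A : 'M[R[i]]_N) : set 'M[R[i]]_N :=
  [set U *m A *m adjmx U | U in K].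

Definition rot_sym (R : realType) (W : set R[i]) : Prop :=
  forall phi : R, [set expi phi * w | w in W] = W.

Definition weak_rot_sym (R : realType) (N : nat) (O : set 'M[R[i]]_N) : Prop :=
  forall phi : R, [set expi phi *: M | M in O] = O.

(* Main.v *)
Require Import Defs.
From HB Require Import structures.
From mathcomp Require Import all_boot all_order all_algebra.
From mathcomp Require Import all_classical all_reals all_analysis.
From mathcomp Require Import complex.
Local Open Scope ring_scope.
Local Open Scope classical_set_scope.
Import GRing.Theory Num.Theory.

Section Aux.
Variables (R : realType) (N : nat).
Implicit Types (X Y M C U V A : 'M[R[i]]_N).

Definition ip X Y := \tr (adjmx X *m Y).

Lemma adjmxM X Y : adjmx (X *m Y) = adjmx Y *m adjmx X.
Proof. by rewrite /adjmx map_mxM trmx_mul. Qed.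

Lemma adjmxK X : adjmx (adjmx X) = X.
Proof. by apply/matrixP => i j; rewrite /adjmx !mxE conjCK. Qed.

Lemma adjmxB X Y : adjmx (X - Y) = adjmx X - adjmx Y.
Proof. by rewrite /adjmx map_mxB linearB. Qed.

Lemma adjmxZ (a : R[i]) X : adjmx (a *: X) = a^* *: adjmx X.
Proof. by rewrite /adjmx map_mxZ linearZ. Qed.

Lemma adjmx1 : adjmx (1%:M : 'M[R[i]]_N) = 1%:M.
Proof. by rewrite /adjmx map_mx1 trmx1. Qed.

Lemma ipE X Y : ip X Y = \sum_i \sum_j (X j i)^* * Y j i.
Proof.
rewrite /ip /mxtrace; apply: eq_bigr => i _; rewrite mxE.
by apply: eq_bigr => j _; rewrite /adjmx !mxE.
Qed.

Lemma ip_conj X Y : (ip X Y)^* = ip Y X.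
Proof.
rewrite !ipE rmorph_sum; apply: eq_bigr => i _.
rewrite rmorph_sum; apply: eq_bigr => j _.
by rewrite rmorphM /= conjCK mulrC.
Qed.

Lemma ip_ge0 X : 0 <= ip X X.
Proof.
rewrite ipE; apply: sumr_ge0 => i _; apply: sumr_ge0 => j _.
by rewrite -normCKC exprn_ge0.
Qed.

Lemma psum0 {C : numDomainType} {I : finType} {F : I -> C} :
  (forall i, 0 <= F i) -> \sum_i F i = 0 -> forall i, F i = 0.
Proof.
move=> H0 /eqP; rewrite psumr_eq0 // => /allP H i.
by apply/eqP; exact: H (mem_index_enum _).
Qed.

Lemma ip_eq0 X : ip X X = 0 -> X = 0.
Proof.
rewrite ipE => H; apply/matrixP => j i; rewrite mxE.
have ge0 : forall x : R[i], 0 <= x^* * x by move=> x; rewrite -normCKC exprn_ge0.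
have H1 : forall i, \sum_j (X j i)^* * X j i = 0.
  by apply: psum0 H => i'; apply: sumr_ge0 => k _.
have := psum0 (fun k => ge0 (X k i)) (H1 i) j.
by rewrite -normCKC => /eqP; rewrite expf_eq0 /= normr_eq0 => /eqP.
Qed.

Lemma ipBB X Y : ip (X - Y) (X - Y) = ip X X - ip X Y - ip Y X + ip Y Y.
Proof.
rewrite /ip adjmxB mulmxBl !mulmxBr !raddfB /=.
by rewrite opprK addrA.
Qed.

Lemma ipZr (a : R[i]) X Y : ip X (a *: Y) = a * ip X Y.
Proof. by rewrite /ip -scalemxAr mxtraceZ. Qed.

Lemma ipZl (a : R[i]) X Y : ip (a *: X) Y = a^* * ip X Y.
Proof. by rewrite /ip adjmxZ -scalemxAl mxtraceZ. Qed.

Lemma unitaryV U : U *m adjmx U = 1%:M -> adjmx U *m U = 1%:M.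
Proof. exact: mulmx1C. Qed.

Lemma ip_conjU U X Y : U *m adjmx U = 1%:M ->
  ip (U *m X *m adjmx U) (U *m Y *m adjmx U) = ip X Y.
Proof.
move=> /unitaryV HU; rewrite /ip !adjmxM adjmxK.
rewrite -!mulmxA (mulmxA (adjmx U) U) HU mul1mx.
rewrite mxtrace_mulC -!mulmxA HU mulmx1 //.
Qed.

Lemma expiN (phi : R) : expi phi * expi (- phi) = 1.
Proof.
rewrite /expi cosN sinN; apply/eqP; rewrite eq_complex /=.
by rewrite mulrN opprK -!expr2 cos2Dsin2 mulrN mulrC addNr !eqxx.
Qed.

Lemma expi_conj (phi : R) : expi phi * (expi phi)^* = 1.
Proof.
rewrite -normCK normc_def /expi /= cos2Dsin2 sqrtr1 expr1n //.
Qed.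

Lemma weak_of_closed (O : set 'M[R[i]]_N) :
  (forall phi M, O M -> O (expi phi *: M)) -> weak_rot_sym O.
Proof.
move=> H phi; apply/seteqP; split => M.
  by case=> M' OM' <-; apply: H.
move=> OM; exists (expi (- phi) *: M); first exact: H.
by rewrite scalerA expiN scale1r.
Qed.

Lemma easy_dir (K : set 'M[R[i]]_N) A :
  weak_rot_sym (orbit_K K A) -> forall C, rot_sym (W_K K C A).
Proof.
move=> H C phi; apply/seteqP; split => w.
  case=> w' [U KU <-] <-.
  have : orbit_K K A (expi phi *: (U *m A *m adjmx U)).
    by rewrite -(H phi); exists (U *m A *m adjmx U) => //; exists U.
  case=> V KV HV; exists V => //.
  by rewrite HV -scalemxAr mxtraceZ.
case=> U KU <-.
have : orbit_K K A (U *m A *m adjmx U) by exists U.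
rewrite -(H phi); case=> M [V KV <-] <-.
exists (\tr (adjmx C *m (V *m A *m adjmx V))); first by exists V.
by rewrite -scalemxAr mxtraceZ.
Qed.

End Aux.
Arguments ip {R N}.


Theorem corollary2p14 (R : realType) (N : nat) (K K' : set 'M[R[i]]_N)
    (A : 'M[R[i]]_N) :
  compact_connected_subgroup_U K ->
  compact_connected_subgroup_U K' ->
  K `<=` K' ->
  ((forall C : 'M[R[i]]_N, rot_sym (W_K K C A)) <-> weak_rot_sym (orbit_K K A))
  /\
  ((forall C : 'M[R[i]]_N, rot_sym (W_K K C A)) ->
     forall C : 'M[R[i]]_N, rot_sym (W_K K' C A)).
Proof.
move=> [KU K1 KM KA _] [K'U K'1 K'M K'A _] KK'.
have hard : (forall C, rot_sym (W_K K C A)) -> weak_rot_sym (orbit_K K A).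
  move=> H; apply: weak_of_closed => phi M0 [U KU0 <-].
  set M := U *m A *m adjmx U.
  set e := expi phi.
  set C := e *: M.
  have HU := KU _ KU0.
  have hW2 : W_K K C A (e * ip C M) by rewrite -(H C phi); exists (ip C M) => //; exists U.
  have eC : e * e^* = 1 by exact: expi_conj.
  have hMM : ip C M = e^* * ip M M by rewrite ipZl.
  rewrite hMM mulrA eC mul1r in hW2.
  case: hW2 => V KV HV.
  have HV' := KU _ KV.
  exists V => //.
  set X := V *m A *m adjmx V in HV *.
  have fA : ip M M = ip A A by rewrite /M ip_conjU.
  have fX : ip X X = ip M M by rewrite fA /X ip_conjU.
  have fCX : ip C X = ip M M by exact: HV.
  have fXC : ip X C = ip M M.
    by rewrite -ip_conj fCX geC0_conj // ip_ge0.
  have fCC : ip C C = ip M M.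
    by rewrite /C ipZl ipZr mulrA [e^* * e]mulrC eC mul1r.
  apply: subr0_eq; apply: (@ip_eq0 R N (X - C)).
  by rewrite ipBB fX fCX fXC fCC subrr sub0r addNr.
split; first by split; [exact: hard | exact: easy_dir].
move=> H; apply: easy_dir; apply: weak_of_closed => phi M0 [V KV <-].
have : orbit_K K A (expi phi *: A).
  rewrite -(hard H phi); exists A => //; exists 1%:M => //.
  by rewrite adjmx1 mul1mx mulmx1.
case=> U KU1 HU1; exists (V *m U); first by apply: K'M => //; apply: KK'.
rewrite adjmxM !mulmxA.
have -> : V *m U *m A *m adjmx U *m adjmx V = V *m (U *m A *m adjmx U) *m adjmx V
  by rewrite !mulmxA.
by rewrite HU1 -scalemxAr -scalemxAl.
Qed.
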